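(* Let $\lambda_1>\lambda_2=\lambda_3>0$, $D=\mathrm{diag}(\lambda_1,\lambda_2,\lambda_2)$, and $G=\widetilde W_{1,0}(\cdot;D)\circ\mathbf P:S^3\to\mathbb R$. Then: (i) The global maxima of $G$ are the points $(0,0,\pm1,0)$, $(0,0,0,\pm1)$ and $(0,0,\cos\alpha,\sin\alpha)$, $\alpha\in[0,2\pi)$; correspondingly the rotations $\mathrm{diag}(-1,1,-1)$, $\mathrm{diag}(-1,-1,1)$ and $$\begin{pmatrix}-1&0&0\\0&\cos2\alpha&\sin2\alpha\\0&\sin2\alpha&-\cos2\alpha\end{pmatrix},\ \alpha\in[0,2\pi),$$ are the global maxima of $\widetilde W_{1,0}(\cdot;D)$ on $SO(3)$. (ii) If $s=\lambda_1+\lambda_2>2$, then, with $a=\sqrt{\frac12+\frac1s}$, $b=\sqrt{\frac12-\frac1s}$, the global minima of $G$ are the points $(\pm a,0,0,\pm b)$, $(\pm a,0,\pm b,0)$ (all sign combinations) and $(\pm a,0,b\cos\alpha,b\sin\alpha)$, $\alpha\in[0,2\pi)$; the corresponding rotations $\mathbf P(q)$ are the global minima of $\widetilde W_{1,0}(\cdot;D)$ on $SO(3)$, with minimal value $(\lambda_2-1)^2+\frac12(\lambda_1-\lambda_2)^2$. (iii) If $\lambda_1+\lambda_2\le2$, then $(\pm1,0,0,0)$ are the only global minima of $G$, and $\mathbb I_3$ is the global minimum of $\widetilde W_{1,0}(\cdot;D)$.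
   Context: $\mathrm{sym}(Y)=\tfrac12(Y+Y^T)$, $\|Y\|^2=\mathrm{tr}(Y^TY)$. $\widetilde W_{1,0}(R;D)=\|\mathrm{sym}(R^TD-\mathbb I_3)\|^2$ for $R\in SO(3)$. $S^3\subset\mathbb R^4$ is the unit sphere and $\mathbf P:S^3\to SO(3)$ is $$\mathbf P(q)=\begin{pmatrix}(q^0)^2+(q^1)^2-(q^2)^2-(q^3)^2 & 2(q^1q^2-q^0q^3) & 2(q^1q^3+q^0q^2)\\ 2(q^1q^2+q^0q^3) & (q^0)^2-(q^1)^2+(q^2)^2-(q^3)^2 & 2(q^2q^3-q^0q^1)\\ 2(q^1q^3-q^0q^2) & 2(q^2q^3+q^0q^1) & (q^0)^2-(q^1)^2-(q^2)^2+(q^3)^2\end{pmatrix},$$ for $q=(q^0,q^1,q^2,q^3)\in S^3$. *)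

(* Defs.v *)
From Stdlib Require Import Reals Lra.
Open Scope R_scope.

(* 3x3 real matrices, indexed by 0,1,2 (entries outside are irrelevant). *)
Definition Mat3 := nat -> nat -> R.
Definition sum3 (f : nat -> R) : R := f 0%nat + f 1%nat + f 2%nat.
Definition mat_eq (A B : Mat3) : Prop :=
  forall i j, (i < 3)%nat -> (j < 3)%nat -> A i j = B i j.
Definition mmul (A B : Mat3) : Mat3 := fun i j => sum3 (fun k => A i k * B k j).
Definition mtr (A : Mat3) : Mat3 := fun i j => A j i.
Definition madd (A B : Mat3) : Mat3 := fun i j => A i j + B i j.
Definition msub (A B : Mat3) : Mat3 := fun i j => A i j - B i j.
Definition mscale (c : R) (A : Mat3) : Mat3 := fun i j => c * A i j.
Definition Id3 : Mat3 := fun i j => if Nat.eqb i j then 1 else 0.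
Definition diag3 (a b c : R) : Mat3 := fun i j =>
  match i, j with
  | 0%nat, 0%nat => a | 1%nat, 1%nat => b | 2%nat, 2%nat => c | _, _ => 0 end.
Definition trace3 (A : Mat3) : R := sum3 (fun i => A i i).
Definition det3 (A : Mat3) : R :=
  A 0%nat 0%nat * (A 1%nat 1%nat * A 2%nat 2%nat - A 1%nat 2%nat * A 2%nat 1%nat)
  - A 0%nat 1%nat * (A 1%nat 0%nat * A 2%nat 2%nat - A 1%nat 2%nat * A 2%nat 0%nat)
  + A 0%nat 2%nat * (A 1%nat 0%nat * A 2%nat 1%nat - A 1%nat 1%nat * A 2%nat 0%nat).

Definition msym (Y : Mat3) : Mat3 := mscale (1/2) (madd Y (mtr Y)).
Definition normsq (Y : Mat3) : R := trace3 (mmul (mtr Y) Y).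

Definition inSO3 (Q : Mat3) : Prop := mat_eq (mmul (mtr Q) Q) Id3 /\ det3 Q = 1.

Definition W10 (Q D : Mat3) : R := normsq (msym (msub (mmul (mtr Q) D) Id3)).

Record quat := mkQ { q0 : R; q1 : R; q2 : R; q3 : R }.
Definition onS3 (q : quat) : Prop := q0 q ^ 2 + q1 q ^ 2 + q2 q ^ 2 + q3 q ^ 2 = 1.

Definition Pmat (q : quat) : Mat3 := fun i j =>
  let a := q0 q in let b := q1 q in let c := q2 q in let d := q3 q in
  match i, j with
  | 0%nat, 0%nat => a^2 + b^2 - c^2 - d^2
  | 0%nat, 1%nat => 2 * (b * c - a * d)
  | 0%nat, 2%nat => 2 * (b * d + a * c)
  | 1%nat, 0%nat => 2 * (b * c + a * d)
  | 1%nat, 1%nat => a^2 - b^2 + c^2 - d^2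
  | 1%nat, 2%nat => 2 * (c * d - a * b)
  | 2%nat, 0%nat => 2 * (b * d - a * c)
  | 2%nat, 1%nat => 2 * (c * d + a * b)
  | 2%nat, 2%nat => a^2 - b^2 - c^2 + d^2
  | _, _ => 0 end.

Definition Gfun (D : Mat3) (q : quat) : R := W10 (Pmat q) D.

Definition isGlobMaxG (D : Mat3) (q : quat) : Prop :=
  onS3 q /\ forall p, onS3 p -> Gfun D p <= Gfun D q.
Definition isGlobMinG (D : Mat3) (q : quat) : Prop :=
  onS3 q /\ forall p, onS3 p -> Gfun D q <= Gfun D p.
Definition isGlobMaxW (D : Mat3) (Q : Mat3) : Prop :=
  inSO3 Q /\ forall S, inSO3 S -> W10 S D <= W10 Q D.
Definition isGlobMinW (D : Mat3) (Q : Mat3) : Prop :=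
  inSO3 Q /\ forall S, inSO3 S -> W10 Q D <= W10 S D.

Definition RmaxAlpha (al : R) : Mat3 := fun i j =>
  match i, j with
  | 0%nat, 0%nat => -1
  | 1%nat, 1%nat => cos (2 * al) | 1%nat, 2%nat => sin (2 * al)
  | 2%nat, 1%nat => sin (2 * al) | 2%nat, 2%nat => - cos (2 * al)
  | _, _ => 0 end.

Definition isSign (e : R) : Prop := e = 1 \/ e = -1.

(* Main.v *)
Require Import Defs.
From Stdlib Require Import Reals.
From Stdlib Require Import Lra Lia Psatz.
Open Scope R_scope.

Lemma polar (c d r : R) : 0 < r -> c^2 + d^2 = r^2 ->
  exists al, 0 <= al < 2 * PI /\ c = r * cos al /\ d = r * sin al.
Proof.
  intros hr h.
  set (x := c / r).
  assert (hx : -1 <= x <= 1).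
  { unfold x. assert (c^2 <= r^2) by nra.
    split.
    - apply (Rmult_le_reg_r r); [lra|]. field_simplify; [|lra]. nra.
    - apply (Rmult_le_reg_r r); [lra|]. field_simplify; [|lra]. nra. }
  assert (hc : c = r * cos (acos x)) by (rewrite cos_acos by lra; unfold x; field; lra).
  assert (hs : sin (acos x) = Rabs d / r).
  { rewrite sin_acos by lra.
    assert (E: 1 - x² = (Rabs d / r)^2).
    { pose proof (Rsqr_abs d) as ha. unfold x, Rsqr in *.
      assert (H' : Rabs d * Rabs d = r*r - c*c) by nra.
      replace ((Rabs d / r)^2) with ((Rabs d * Rabs d)/(r*r)) by (field; lra).
      rewrite H'. field. lra. }
    rewrite E. rewrite sqrt_pow2; auto.
    unfold Rdiv; apply Rmult_le_pos; [apply Rabs_pos|left; apply Rinv_0_lt_compat; lra]. }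
  pose proof (acos_bound x) as hb. pose proof PI_RGT_0.
  destruct (Rle_dec 0 d) as [hd|hd].
  - exists (acos x). split; [lra|]. split; auto.
    rewrite hs, Rabs_right by lra. field; lra.
  - assert (hb2 : acos x <> 0).
    { intro e. rewrite e, sin_0 in hs. assert (Rabs d > 0) by (apply Rabs_pos_lt; lra).
      assert (Rabs d / r > 0) by (apply Rdiv_lt_0_compat; lra). lra. }
    exists (2 * PI - acos x). split; [lra|]. split.
    + rewrite cos_minus, cos_2PI, sin_2PI. rewrite hc at 1. ring.
    + rewrite sin_minus, cos_2PI, sin_2PI, hs, Rabs_left by lra. field. lra.
Qed.


Definition Gexpr (l1 l2 u v w : R) : R :=
   (l1^2 + 2*l2^2)/2 * (u+v+w)^2
   + (l1^2*(u+v-w)^2 + l2^2*(2*(u-v)^2 + 2*w^2 - 8*u*v) + 8*l1*l2*w*(v-u))/2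
   - 2*(l1*(u+v-w) + 2*l2*(u-v)) + 3.

Lemma G_exact (l1 l2 : R) (q : quat) :
  Gfun (diag3 l1 l2 l2) q = Gexpr l1 l2 (q0 q ^ 2) (q1 q ^ 2) (q2 q ^ 2 + q3 q ^ 2).
Proof.
  destruct q as [a b c d]. unfold Gexpr.
  cbv beta iota zeta delta [Gfun W10 normsq msym msub mmul mtr mscale madd trace3 sum3 Id3 diag3 Pmat q0 q1 q2 q3 Nat.eqb].
  field_simplify_eq. ring.
Qed.

Lemma poly_max l1 l2 u v w : u + v + w = 1 ->
  Gexpr l1 l2 u v w = (l1^2 + 2*l2^2 + 3 + 2*l1)
    - (4*(l1+l2)*u + 4*(l1-l2)*v + 2*(l1+l2)^2*u*w + 2*(l1-l2)^2*v*w + 8*l2^2*u*v).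
Proof. intro h. replace w with (1-u-v) by lra. unfold Gexpr. field_simplify_eq. ring. Qed.

Lemma poly_min l1 l2 u v w : u + v + w = 1 -> l1 + l2 <> 0 ->
  let s := l1 + l2 in let z := u + (l1 - l2) * v / s in
  Gexpr l1 l2 u v w = (l1^2 + 2*l2^2 + 3 + 2*l1) - (4*s + 2*s^2)*z + 2*s^2*z^2
    + 4*l2*(l1-l2)*v.
Proof. intros h hs s z. unfold z, s. replace w with (1-u-v) by lra. unfold Gexpr.
  field_simplify_eq; [ring|exact hs]. Qed.


Definition cof (Q : Mat3) (j k : nat) : R :=
  match j, k with
  | 0%nat, 0%nat => Q 1%nat 1%nat * Q 2%nat 2%nat - Q 1%nat 2%nat * Q 2%nat 1%nat
  | 0%nat, 1%nat => Q 1%nat 2%nat * Q 2%nat 0%nat - Q 1%nat 0%nat * Q 2%nat 2%nat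
  | 0%nat, 2%nat => Q 1%nat 0%nat * Q 2%nat 1%nat - Q 1%nat 1%nat * Q 2%nat 0%nat
  | 1%nat, 0%nat => Q 0%nat 2%nat * Q 2%nat 1%nat - Q 0%nat 1%nat * Q 2%nat 2%nat
  | 1%nat, 1%nat => Q 0%nat 0%nat * Q 2%nat 2%nat - Q 0%nat 2%nat * Q 2%nat 0%nat
  | 1%nat, 2%nat => Q 0%nat 1%nat * Q 2%nat 0%nat - Q 0%nat 0%nat * Q 2%nat 1%nat
  | 2%nat, 0%nat => Q 0%nat 1%nat * Q 1%nat 2%nat - Q 0%nat 2%nat * Q 1%nat 1%nat
  | 2%nat, 1%nat => Q 0%nat 2%nat * Q 1%nat 0%nat - Q 0%nat 0%nat * Q 1%nat 2%nat
  | 2%nat, 2%nat => Q 0%nat 0%nat * Q 1%nat 1%nat - Q 0%nat 1%nat * Q 1%nat 0%nat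
  | _, _ => 0 end.

Lemma cof_key Q i j : (i < 3)%nat -> (j < 3)%nat ->
  cof Q j i - Q j i = sum3 (fun k => (Id3 i k - mmul (mtr Q) Q i k) * cof Q j k)
                      + Q j i * (det3 Q - 1).
Proof.
  intros hi hj.
  destruct i as [|[|[|i]]]; try lia; destruct j as [|[|[|j]]]; try lia;
  cbv beta iota zeta delta [cof sum3 Id3 mmul mtr det3 Nat.eqb]; ring.
Qed.

Lemma SO3_cof Q : inSO3 Q -> forall j i, (j < 3)%nat -> (i < 3)%nat -> Q j i = cof Q j i.
Proof.
  intros [Hm Hd] j i hj hi.
  pose proof (cof_key Q i j hi hj) as K. unfold sum3 in K.
  rewrite (Hm i 0%nat hi ltac:(lia)), (Hm i 1%nat hi ltac:(lia)), (Hm i 2%nat hi ltac:(lia)), Hd in K.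
  lra.
Qed.

Lemma core (x00 x01 x02 x10 x11 x12 x20 x21 x22 : R)
  (c00 : x00*x00 + x10*x10 + x20*x20 = 1)
  (c11 : x01*x01 + x11*x11 + x21*x21 = 1)
  (c22 : x02*x02 + x12*x12 + x22*x22 = 1)
  (c01 : x00*x01 + x10*x11 + x20*x21 = 0)
  (c02 : x00*x02 + x10*x12 + x20*x22 = 0)
  (c12 : x01*x02 + x11*x12 + x21*x22 = 0)
  (hdet : x00*(x11*x22 - x12*x21) - x01*(x10*x22 - x12*x20) + x02*(x10*x21 - x11*x20) = 1)
  (e00 : x00 = x11*x22 - x12*x21) (e01 : x01 = x12*x20 - x10*x22) (e02 : x02 = x10*x21 - x11*x20)
  (e10 : x10 = x02*x21 - x01*x22) (e11 : x11 = x00*x22 - x02*x20) (e12 : x12 = x01*x20 - x00*x21)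
  (e20 : x20 = x01*x12 - x02*x11) (e21 : x21 = x02*x10 - x00*x12) (e22 : x22 = x00*x11 - x01*x10)
  (ht : 0 < 1 + x00 + x11 + x22) :
  exists a b c d, a^2+b^2+c^2+d^2 = 1 /\
    x00 = a^2+b^2-c^2-d^2 /\ x01 = 2*(b*c - a*d) /\ x02 = 2*(b*d + a*c) /\
    x10 = 2*(b*c + a*d) /\ x11 = a^2-b^2+c^2-d^2 /\ x12 = 2*(c*d - a*b) /\
    x20 = 2*(b*d - a*c) /\ x21 = 2*(c*d + a*b) /\ x22 = a^2-b^2-c^2+d^2.
Proof.
  pose proof (f_equal (fun t => x00 * t) e00) as m00.
  pose proof (f_equal (fun t => x01 * t) e01) as m01.
  pose proof (f_equal (fun t => x02 * t) e02) as m02.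
  pose proof (f_equal (fun t => x10 * t) e10) as m10.
  pose proof (f_equal (fun t => x11 * t) e11) as m11.
  pose proof (f_equal (fun t => x12 * t) e12) as m12.
  pose proof (f_equal (fun t => x20 * t) e20) as m20.
  pose proof (f_equal (fun t => x21 * t) e21) as m21.
  pose proof (f_equal (fun t => x22 * t) e22) as m22.
  pose proof (f_equal (fun t => x10 * t) e00) as n100.
  pose proof (f_equal (fun t => x11 * t) e01) as n101.
  pose proof (f_equal (fun t => x12 * t) e02) as n102.
  pose proof (f_equal (fun t => x20 * t) e00) as n200.
  pose proof (f_equal (fun t => x21 * t) e01) as n201.
  pose proof (f_equal (fun t => x22 * t) e02) as n202.
  pose proof (f_equal (fun t => x20 * t) e10) as n210.
  pose proof (f_equal (fun t => x21 * t) e11) as n211.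
  pose proof (f_equal (fun t => x22 * t) e12) as n212.
  simpl in *.
  assert (r00 : x00*x00 + x01*x01 + x02*x02 = 1) by lra.
  assert (r11 : x10*x10 + x11*x11 + x12*x12 = 1) by lra.
  assert (r22 : x20*x20 + x21*x21 + x22*x22 = 1) by lra.
  assert (r01 : x10*x00 + x11*x01 + x12*x02 = 0) by lra.
  assert (r02 : x20*x00 + x21*x01 + x22*x02 = 0) by lra.
  assert (r12 : x20*x10 + x21*x11 + x22*x12 = 0) by lra.
  set (t := 1 + x00 + x11 + x22).
  set (K11 := 1 + x00 - x11 - x22). set (K22 := 1 - x00 + x11 - x22).
  set (K33 := 1 - x00 - x11 + x22).
  set (K01 := x21 - x12). set (K02 := x02 - x20). set (K03 := x10 - x01).
  set (K12 := x01 + x10). set (K13 := x02 + x20). set (K23 := x12 + x21).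
  assert (i1 : K01 * K01 = t * K11) by (unfold K01, K11, t; lra).
  assert (i2 : K02 * K02 = t * K22) by (unfold K02, K22, t; lra).
  assert (i3 : K03 * K03 = t * K33) by (unfold K03, K33, t; lra).
  assert (i4 : K01 * K02 = t * K12) by (unfold K01, K02, K12, t; lra).
  assert (i5 : K01 * K03 = t * K13) by (unfold K01, K03, K13, t; lra).
  assert (i6 : K02 * K03 = t * K23) by (unfold K02, K03, K23, t; lra).
  assert (hta : 0 < sqrt t) by (apply sqrt_lt_R0; unfold t; lra).
  assert (hst : sqrt t * sqrt t = t) by (apply sqrt_sqrt; unfold t; lra).
  set (a := sqrt t / 2).
  assert (ha : a * a = t / 4) by (unfold a; replace (sqrt t / 2 * (sqrt t / 2)) with (sqrt t * sqrt t / 4) by field; rewrite hst; reflexivity).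
  assert (ha0 : a <> 0) by (unfold a; lra).
  set (b := K01 / (4*a)). set (c := K02 / (4*a)). set (d := K03 / (4*a)).
  assert (pab : a * b = K01 / 4) by (unfold b; field; lra).
  assert (pac : a * c = K02 / 4) by (unfold c; field; lra).
  assert (pad : a * d = K03 / 4) by (unfold d; field; lra).
  assert (ht0 : t <> 0) by (unfold t; lra).
  assert (pbb : b * b = K11 / 4).
  { unfold b. replace (K01 / (4*a) * (K01 / (4*a))) with (K01 * K01 / (16 * (a*a))) by (field; lra).
    rewrite i1, ha. field. lra. }
  assert (pcc : c * c = K22 / 4).
  { unfold c. replace (K02 / (4*a) * (K02 / (4*a))) with (K02 * K02 / (16 * (a*a))) by (field; lra).
    rewrite i2, ha. field. lra. }
  assert (pdd : d * d = K33 / 4).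
  { unfold d. replace (K03 / (4*a) * (K03 / (4*a))) with (K03 * K03 / (16 * (a*a))) by (field; lra).
    rewrite i3, ha. field. lra. }
  assert (pbc : b * c = K12 / 4).
  { unfold b, c. replace (K01 / (4*a) * (K02 / (4*a))) with (K01 * K02 / (16 * (a*a))) by (field; lra).
    rewrite i4, ha. field. lra. }
  assert (pbd : b * d = K13 / 4).
  { unfold b, d. replace (K01 / (4*a) * (K03 / (4*a))) with (K01 * K03 / (16 * (a*a))) by (field; lra).
    rewrite i5, ha. field. lra. }
  assert (pcd : c * d = K23 / 4).
  { unfold c, d. replace (K02 / (4*a) * (K03 / (4*a))) with (K02 * K03 / (16 * (a*a))) by (field; lra).
    rewrite i6, ha. field. lra. }
  clearbody a b c d.
  exists a, b, c, d.
  unfold t, K11, K22, K33, K01, K02, K03, K12, K13, K23 in *.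
  repeat split; lra.
Qed.

Lemma surj_pos Q : inSO3 Q -> 0 < 1 + Q 0%nat 0%nat + Q 1%nat 1%nat + Q 2%nat 2%nat ->
  exists q, onS3 q /\ mat_eq Q (Pmat q).
Proof.
  intros HQ ht.
  pose proof (SO3_cof Q HQ) as Hc.
  destruct HQ as [Hm Hd].
  pose proof (Hm 0%nat 0%nat ltac:(lia) ltac:(lia)) as c00.
  pose proof (Hm 1%nat 1%nat ltac:(lia) ltac:(lia)) as c11.
  pose proof (Hm 2%nat 2%nat ltac:(lia) ltac:(lia)) as c22.
  pose proof (Hm 0%nat 1%nat ltac:(lia) ltac:(lia)) as c01.
  pose proof (Hm 0%nat 2%nat ltac:(lia) ltac:(lia)) as c02.
  pose proof (Hm 1%nat 2%nat ltac:(lia) ltac:(lia)) as c12.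
  cbv beta iota zeta delta [mmul mtr sum3 Id3 Nat.eqb] in c00, c11, c22, c01, c02, c12.
  unfold det3 in Hd.
  destruct (core (Q 0%nat 0%nat) (Q 0%nat 1%nat) (Q 0%nat 2%nat) (Q 1%nat 0%nat) (Q 1%nat 1%nat)
     (Q 1%nat 2%nat) (Q 2%nat 0%nat) (Q 2%nat 1%nat) (Q 2%nat 2%nat) c00 c11 c22 c01 c02 c12 Hd
     (Hc 0%nat 0%nat ltac:(lia) ltac:(lia)) (Hc 0%nat 1%nat ltac:(lia) ltac:(lia))
     (Hc 0%nat 2%nat ltac:(lia) ltac:(lia)) (Hc 1%nat 0%nat ltac:(lia) ltac:(lia))
     (Hc 1%nat 1%nat ltac:(lia) ltac:(lia)) (Hc 1%nat 2%nat ltac:(lia) ltac:(lia))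
     (Hc 2%nat 0%nat ltac:(lia) ltac:(lia)) (Hc 2%nat 1%nat ltac:(lia) ltac:(lia))
     (Hc 2%nat 2%nat ltac:(lia) ltac:(lia)) ht)
    as [a [b [c [d [hn [h00 [h01 [h02 [h10 [h11 [h12 [h20 [h21 h22]]]]]]]]]]]]].
  exists (mkQ a b c d). split; [exact hn|].
  intros i j hi hj.
  destruct i as [|[|[|i]]]; try lia; destruct j as [|[|[|j]]]; try lia; simpl; assumption.
Qed.


Definition flip (Q : Mat3) (s0 s1 s2 : R) : Mat3 := fun i j =>
  Q i j * (match j with 0%nat => s0 | 1%nat => s1 | _ => s2 end).

Ltac flip_tac :=
  let Hm := fresh in let Hd := fresh in
  intros [Hm Hd]; split;
  [ intros i j hi hj; specialize (Hm i j hi hj);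
    destruct i as [|[|[|i]]]; try lia; destruct j as [|[|[|j]]]; try lia;
    cbv beta iota zeta delta [flip mmul mtr sum3 Id3 Nat.eqb] in *; lra
  | cbv beta iota zeta delta [flip det3] in *; lra ].

Lemma flip1 Q : inSO3 Q -> inSO3 (flip Q 1 (-1) (-1)). Proof. flip_tac. Qed.
Lemma flip2 Q : inSO3 Q -> inSO3 (flip Q (-1) 1 (-1)). Proof. flip_tac. Qed.
Lemma flip3 Q : inSO3 Q -> inSO3 (flip Q (-1) (-1) 1). Proof. flip_tac. Qed.

Ltac back_tac hq h :=
  split; [unfold onS3 in *; simpl in *; lra|];
  intros i j hi hj; specialize (h i j hi hj);
  destruct i as [|[|[|i]]]; try lia; destruct j as [|[|[|j]]]; try lia;
  cbv beta iota zeta delta [flip Pmat q0 q1 q2 q3] in *; lra.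

Lemma surj Q : inSO3 Q -> exists q, onS3 q /\ mat_eq Q (Pmat q).
Proof.
  intros HQ.
  destruct (Rlt_dec 0 (1 + Q 0%nat 0%nat + Q 1%nat 1%nat + Q 2%nat 2%nat)) as [h0|h0].
  { apply surj_pos; assumption. }
  destruct (Rlt_dec 0 (1 + Q 0%nat 0%nat - Q 1%nat 1%nat - Q 2%nat 2%nat)) as [h1|h1].
  { destruct (surj_pos _ (flip1 Q HQ)) as [[a b c d] [hq h]]; [unfold flip; lra|].
    exists (mkQ (-b) a d (-c)). back_tac hq h. }
  destruct (Rlt_dec 0 (1 - Q 0%nat 0%nat + Q 1%nat 1%nat - Q 2%nat 2%nat)) as [h2|h2].
  { destruct (surj_pos _ (flip2 Q HQ)) as [[a b c d] [hq h]]; [unfold flip; lra|].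
    exists (mkQ (-c) (-d) a b). back_tac hq h. }
  { destruct (surj_pos _ (flip3 Q HQ)) as [[a b c d] [hq h]]; [unfold flip; lra|].
    exists (mkQ (-d) c (-b) a). back_tac hq h. }
Qed.


Lemma P_SO3 q : onS3 q -> inSO3 (Pmat q).
Proof.
  destruct q as [a b c d]; unfold onS3; cbn [q0 q1 q2 q3]; intro hn.
  assert (hn2 : (a^2+b^2+c^2+d^2)^2 = 1) by (rewrite hn; ring).
  assert (hn3 : (a^2+b^2+c^2+d^2)^3 = 1) by (rewrite hn; ring).
  split.
  - intros i j hi hj.
    destruct i as [|[|[|i]]]; try lia; destruct j as [|[|[|j]]]; try lia;
    cbv beta iota zeta delta [Pmat mmul mtr sum3 Id3 Nat.eqb q0 q1 q2 q3]; lra.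
  - cbv beta iota zeta delta [Pmat det3 q0 q1 q2 q3]; lra.
Qed.

Ltac rw9 H :=
  rewrite ?(H 0%nat 0%nat), ?(H 0%nat 1%nat), ?(H 0%nat 2%nat), ?(H 1%nat 0%nat), ?(H 1%nat 1%nat),
          ?(H 1%nat 2%nat), ?(H 2%nat 0%nat), ?(H 2%nat 1%nat), ?(H 2%nat 2%nat) by lia.

Lemma W10_ext A B D : mat_eq A B -> W10 A D = W10 B D.
Proof.
  intro H. cbv beta iota zeta delta [W10 normsq msym msub mmul mtr mscale madd trace3 sum3].
  rw9 H. reflexivity.
Qed.

Lemma SO3_ext A B : mat_eq A B -> inSO3 A -> inSO3 B.
Proof.
  intros H [Hm Hd]. split.
  - intros i j hi hj. rewrite <- (Hm i j hi hj).
    destruct i as [|[|[|i]]]; try lia; destruct j as [|[|[|j]]]; try lia; cbv beta iota zeta delta [mmul mtr sum3]; rw9 H; reflexivity.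
  - transitivity (det3 A); [|exact Hd]. unfold det3. rw9 H. reflexivity.
Qed.


Lemma mat_eq_sym A B : mat_eq A B -> mat_eq B A.
Proof. intros H i j hi hj; symmetry; auto. Qed.
Lemma mat_eq_trans A B C : mat_eq A B -> mat_eq B C -> mat_eq A C.
Proof. intros H1 H2 i j hi hj; rewrite H1 by auto; auto. Qed.

Lemma max_transfer D Q q : isGlobMaxG D q -> mat_eq (Pmat q) Q -> isGlobMaxW D Q.
Proof.
  intros [hq H] hE. split.
  - apply (SO3_ext _ _ hE), P_SO3, hq.
  - intros S hS. destruct (surj S hS) as [p [hp hpE]].
    rewrite (W10_ext _ _ D hpE), <- (W10_ext _ _ D hE). apply H, hp.
Qed.

Lemma max_back D Q : isGlobMaxW D Q -> exists q, isGlobMaxG D q /\ mat_eq Q (Pmat q).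
Proof.
  intros [hQ H]. destruct (surj Q hQ) as [q [hq hE]]. exists q. split; [|exact hE].
  split; [exact hq|]. intros p hp. unfold Gfun.
  rewrite <- (W10_ext _ _ D hE). apply H, P_SO3, hp.
Qed.

Lemma min_transfer D Q q : isGlobMinG D q -> mat_eq (Pmat q) Q -> isGlobMinW D Q.
Proof.
  intros [hq H] hE. split.
  - apply (SO3_ext _ _ hE), P_SO3, hq.
  - intros S hS. destruct (surj S hS) as [p [hp hpE]].
    rewrite (W10_ext _ _ D hpE), <- (W10_ext _ _ D hE). apply H, hp.
Qed.

Lemma min_back D Q : isGlobMinW D Q -> exists q, isGlobMinG D q /\ mat_eq Q (Pmat q).
Proof.
  intros [hQ H]. destruct (surj Q hQ) as [q [hq hE]]. exists q. split; [|exact hE].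
  split; [exact hq|]. intros p hp. unfold Gfun.
  rewrite <- (W10_ext _ _ D hE). apply H, P_SO3, hp.
Qed.

Lemma Gform_max l1 l2 a b c d : a^2+b^2+c^2+d^2 = 1 ->
  Gfun (diag3 l1 l2 l2) (mkQ a b c d) = (l1^2 + 2*l2^2 + 3 + 2*l1)
    - (4*(l1+l2)*a^2 + 4*(l1-l2)*b^2 + 2*(l1+l2)^2*a^2*(c^2+d^2) + 2*(l1-l2)^2*b^2*(c^2+d^2)
       + 8*l2^2*a^2*b^2).
Proof. intro h. rewrite G_exact. cbn [q0 q1 q2 q3]. apply poly_max. lra. Qed.

Lemma Gform_min l1 l2 a b c d : a^2+b^2+c^2+d^2 = 1 -> l1 + l2 <> 0 ->
  let s := l1 + l2 in
  Gfun (diag3 l1 l2 l2) (mkQ a b c d) =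
    ((l2 - 1) ^ 2 + 1/2 * (l1 - l2) ^ 2) + 2*s^2*(a^2 + (l1-l2)*b^2/s - (1/2 + 1/s))^2
    + 4*l2*(l1-l2)*b^2.
Proof. intros h hs s. rewrite G_exact. cbn [q0 q1 q2 q3]. rewrite poly_min by (auto; lra).
  unfold s. field_simplify_eq; [ring | exact hs]. Qed.

Lemma Gform_min3 l1 l2 a b c d : a^2+b^2+c^2+d^2 = 1 -> l1 + l2 <> 0 ->
  let s := l1 + l2 in let z := a^2 + (l1-l2)*b^2/s in
  Gfun (diag3 l1 l2 l2) (mkQ a b c d) =
    (l1^2 + 2*l2^2 + 3 - 2*l1 - 4*l2) + (1 - z) * (2*s) * (2 - s*z) + 4*l2*(l1-l2)*b^2.
Proof. intros h hs s z. rewrite G_exact. cbn [q0 q1 q2 q3]. rewrite poly_min by (auto; lra).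
  unfold z, s. field_simplify_eq; [ring | exact hs]. Qed.


Lemma sq0 x : x^2 = 0 -> x = 0.
Proof. intro h. destruct (Req_dec x 0) as [e|e]; auto. exfalso; apply (pow_nonzero x 2 e h). Qed.

Lemma qmax_iff l1 l2 (h12 : l1 > l2) (h2 : l2 > 0) q :
  isGlobMaxG (diag3 l1 l2 l2) q <-> onS3 q /\ q0 q = 0 /\ q1 q = 0.
Proof.
  destruct q as [a b c d]. unfold isGlobMaxG, onS3; cbn [q0 q1 q2 q3]. split.
  - intros [hq H]. split; [exact hq|].
    specialize (H (mkQ 0 0 1 0) ltac:(cbn; lra)).
    rewrite (Gform_max _ _ 0 0 1 0), (Gform_max _ _ a b c d) in H by lra.
    assert (ha2 : 0 <= a^2) by apply pow2_ge_0. assert (hb2 : 0 <= b^2) by apply pow2_ge_0. assert (hw : 0 <= c^2+d^2) by (pose proof (pow2_ge_0 c); pose proof (pow2_ge_0 d); lra).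
    assert (p1 : 0 <= a^2*(c^2+d^2)) by (apply Rmult_le_pos; assumption). assert (p2 : 0 <= b^2*(c^2+d^2)) by (apply Rmult_le_pos; assumption).
    assert (p3 : 0 <= a^2*b^2) by (apply Rmult_le_pos; assumption).
    assert (0 <= (l1+l2)^2*a^2*(c^2+d^2)) by (rewrite Rmult_assoc; apply Rmult_le_pos; [apply pow2_ge_0|assumption]).
    assert (0 <= (l1-l2)^2*b^2*(c^2+d^2)) by (rewrite Rmult_assoc; apply Rmult_le_pos; [apply pow2_ge_0|assumption]).
    assert (0 <= l2^2*a^2*b^2) by (rewrite Rmult_assoc; apply Rmult_le_pos; [apply pow2_ge_0|assumption]).
    assert (hu : (l1+l2)*a^2 <= 0) by nra.
    assert (hv : (l1-l2)*b^2 <= 0) by nra.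
    assert (a^2 = 0) by (apply Rle_antisym; [|exact ha2]; apply (Rmult_le_reg_l (l1+l2)); lra).
    assert (b^2 = 0) by (apply Rle_antisym; [|exact hb2]; apply (Rmult_le_reg_l (l1-l2)); lra).
    split; apply sq0; assumption.
  - intros [hq [ha hb]]. subst a b. split; [exact hq|].
    intros [a b c' d'] hp. unfold onS3 in hp; cbn [q0 q1 q2 q3] in hp.
    rewrite (Gform_max _ _ a b c' d'), (Gform_max _ _ 0 0 c d) by lra.
    assert (ha2 : 0 <= a^2) by apply pow2_ge_0. assert (hb2 : 0 <= b^2) by apply pow2_ge_0. assert (hw : 0 <= c'^2+d'^2) by (pose proof (pow2_ge_0 c'); pose proof (pow2_ge_0 d'); lra).
    assert (p1 : 0 <= a^2*(c'^2+d'^2)) by (apply Rmult_le_pos; assumption). assert (p2 : 0 <= b^2*(c'^2+d'^2)) by (apply Rmult_le_pos; assumption).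
    assert (p3 : 0 <= a^2*b^2) by (apply Rmult_le_pos; assumption).
    assert (0 <= (l1+l2)^2*a^2*(c'^2+d'^2)) by (rewrite Rmult_assoc; apply Rmult_le_pos; [apply pow2_ge_0|assumption]).
    assert (0 <= (l1-l2)^2*b^2*(c'^2+d'^2)) by (rewrite Rmult_assoc; apply Rmult_le_pos; [apply pow2_ge_0|assumption]).
    assert (0 <= l2^2*a^2*b^2) by (rewrite Rmult_assoc; apply Rmult_le_pos; [apply pow2_ge_0|assumption]).
    nra.
Qed.

Lemma qmin2_iff l1 l2 (h12 : l1 > l2) (h2 : l2 > 0) (hs : l1 + l2 > 2) q :
  isGlobMinG (diag3 l1 l2 l2) q <->
  onS3 q /\ q1 q = 0 /\ q0 q ^ 2 = 1/2 + 1/(l1+l2).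
Proof.
  assert (hs0 : l1 + l2 <> 0) by lra.
  assert (hz0 : 0 <= 1/2 + 1/(l1+l2)).
  { assert (0 < 1/(l1+l2)) by (apply Rdiv_lt_0_compat; lra). lra. }
  assert (hz1 : 0 <= 1/2 - 1/(l1+l2)).
  { assert (1/(l1+l2) < 1/2) by (apply Rmult_lt_reg_r with (l1+l2); [lra|]; field_simplify; lra). lra. }
  set (m := (l2 - 1) ^ 2 + 1/2 * (l1 - l2) ^ 2).
  set (s := l1 + l2) in *.
  assert (hsp : 0 < s) by (unfold s; lra).
  destruct q as [a b c d]. unfold isGlobMinG, onS3; cbn [q0 q1 q2 q3]. split.
  - intros [hq H]. split; [exact hq|].
    set (pa := sqrt (1/2 + 1/s)). set (pb := sqrt (1/2 - 1/s)).
    assert (hpa : pa^2 = 1/2 + 1/s) by (apply pow2_sqrt; exact hz0).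
    assert (hpb : pb^2 = 1/2 - 1/s) by (apply pow2_sqrt; exact hz1).
    specialize (H (mkQ pa 0 pb 0) ltac:(cbn; lra)).
    pose proof (Gform_min l1 l2 pa 0 pb 0 ltac:(lra) hs0) as E1.
    pose proof (Gform_min l1 l2 a b c d hq hs0) as E2.
    cbv zeta in E1, E2. fold s in E1, E2. rewrite E1, E2 in H.
    rewrite hpa in H.
    assert (hb2 : 0 <= b^2) by apply pow2_ge_0.
    assert (hk : 0 <= 4*l2*(l1-l2)*b^2) by (apply Rmult_le_pos; [nra|exact hb2]).
    assert (hq2 : 0 <= 2*s^2*(a ^ 2 + (l1 - l2) * b ^ 2 / s - (1 / 2 + 1 / s)) ^ 2).
    { apply Rmult_le_pos; [nra|apply pow2_ge_0]. }
    replace ((l1 - l2) * 0 ^ 2 / s) with 0 in H by (field; lra).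
    replace (1/2 + 1/s + 0 - (1/2 + 1/s)) with 0 in H by ring.
    assert (e1 : 4*l2*(l1-l2)*b^2 = 0) by (simpl in H; lra).
    assert (eb : b^2 = 0).
    { assert (4*l2*(l1-l2) <> 0) by (apply Rmult_integral_contrapositive; split; [lra|lra]).
      apply (Rmult_eq_reg_l (4*l2*(l1-l2))); [lra|auto]. }
    split; [apply sq0; exact eb|].
    rewrite eb in H. replace ((l1 - l2) * 0 / s) with 0 in H by (field; lra).
    assert (hq3 : 0 <= 2*s^2*(a ^ 2 + 0 - (1 / 2 + 1 / s)) ^ 2).
    { apply Rmult_le_pos; [nra|apply pow2_ge_0]. }
    assert (e2 : 2*s^2*(a ^ 2 + 0 - (1 / 2 + 1 / s)) ^ 2 = 0) by lra.
    assert (e3 : (a ^ 2 + 0 - (1 / 2 + 1 / s)) ^ 2 = 0).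
    { apply (Rmult_eq_reg_l (2*s^2)); [lra|]. apply Rgt_not_eq. nra. }
    apply sq0 in e3. lra.
  - intros [hq [hb ha]]. subst b. split; [exact hq|].
    intros [a' b' c' d'] hp. unfold onS3 in hp; cbn [q0 q1 q2 q3] in hp.
    pose proof (Gform_min l1 l2 a 0 c d hq hs0) as E1.
    pose proof (Gform_min l1 l2 a' b' c' d' hp hs0) as E2.
    cbv zeta in E1, E2. fold s in E1, E2. rewrite E1, E2.
    rewrite ha. replace ((l1 - l2) * 0 ^ 2 / s) with 0 by (field; lra).
    assert (hb2 : 0 <= b'^2) by apply pow2_ge_0.
    assert (hk : 0 <= 4*l2*(l1-l2)*b'^2) by (apply Rmult_le_pos; [nra|exact hb2]).
    assert (hq2 : 0 <= 2*s^2*(a' ^ 2 + (l1 - l2) * b' ^ 2 / s - (1 / 2 + 1 / s)) ^ 2).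
    { apply Rmult_le_pos; [nra|apply pow2_ge_0]. }
    replace (1/2 + 1/s + 0 - (1/2 + 1/s)) with 0 by ring. simpl. lra.
Qed.

Lemma z_facts l1 l2 a b c d (h12 : l1 > l2) (h2 : l2 > 0) : a^2+b^2+c^2+d^2 = 1 ->
  0 <= a^2 + (l1-l2)*b^2/(l1+l2) <= 1.
Proof.
  intro h.
  assert (hb : 0 <= b^2) by apply pow2_ge_0.
  assert (0 <= a^2) by apply pow2_ge_0.
  assert (0 <= c^2) by apply pow2_ge_0.
  assert (0 <= d^2) by apply pow2_ge_0.
  assert (0 <= (l1-l2)*b^2/(l1+l2) <= b^2).
  { split.
    - apply Rmult_le_pos; [apply Rmult_le_pos; lra|]. left; apply Rinv_0_lt_compat; lra.
    - apply (Rmult_le_reg_r (l1+l2)); [lra|]. field_simplify; [|lra]. nra. }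
  lra.
Qed.

Lemma qmin3_iff l1 l2 (h12 : l1 > l2) (h2 : l2 > 0) (hs : l1 + l2 <= 2) q :
  isGlobMinG (diag3 l1 l2 l2) q <-> (q = mkQ 1 0 0 0 \/ q = mkQ (-1) 0 0 0).
Proof.
  assert (hs0 : l1 + l2 <> 0) by lra.
  set (s := l1 + l2) in *.
  assert (hsp : 0 < s) by (unfold s; lra).
  assert (key : forall a b c d, a^2+b^2+c^2+d^2 = 1 ->
     0 <= (1 - (a^2 + (l1-l2)*b^2/s)) * (2*s) * (2 - s*(a^2 + (l1-l2)*b^2/s))
     /\ 0 <= 4*l2*(l1-l2)*b^2).
  { intros a b c d h. pose proof (z_facts l1 l2 a b c d h12 h2 h) as [z0 z1]. fold s in z0, z1.
    split.
    - apply Rmult_le_pos; [apply Rmult_le_pos; lra|]. nra.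
    - apply Rmult_le_pos; [nra|apply pow2_ge_0]. }
  assert (v1 : Gfun (diag3 l1 l2 l2) (mkQ 1 0 0 0) = l1^2 + 2*l2^2 + 3 - 2*l1 - 4*l2).
  { pose proof (Gform_min3 l1 l2 1 0 0 0 ltac:(lra) hs0) as E. cbv zeta in E. fold s in E.
    rewrite E. field_simplify; [reflexivity|exact hs0]. }
  assert (v2 : Gfun (diag3 l1 l2 l2) (mkQ (-1) 0 0 0) = l1^2 + 2*l2^2 + 3 - 2*l1 - 4*l2).
  { pose proof (Gform_min3 l1 l2 (-1) 0 0 0 ltac:(lra) hs0) as E. cbv zeta in E. fold s in E.
    rewrite E. field_simplify; [reflexivity|exact hs0]. }
  assert (low : forall p, onS3 p -> l1^2 + 2*l2^2 + 3 - 2*l1 - 4*l2 <= Gfun (diag3 l1 l2 l2) p).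
  { intros [a b c d] hp. unfold onS3 in hp; cbn [q0 q1 q2 q3] in hp.
    pose proof (Gform_min3 l1 l2 a b c d hp hs0) as E. cbv zeta in E. fold s in E.
    rewrite E. pose proof (key a b c d hp). lra. }
  split.
  - intros [hq H]. destruct q as [a b c d]. unfold onS3 in hq; cbn [q0 q1 q2 q3] in hq.
    specialize (H (mkQ 1 0 0 0) ltac:(unfold onS3; cbn; lra)). rewrite v1 in H.
    pose proof (Gform_min3 l1 l2 a b c d hq hs0) as E. cbv zeta in E. fold s in E.
    rewrite E in H. destruct (key a b c d hq) as [k1 k2].
    assert (e1 : 4*l2*(l1-l2)*b^2 = 0) by lra.
    assert (eb : b^2 = 0).
    { assert (4*l2*(l1-l2) <> 0) by (apply Rmult_integral_contrapositive; split; [lra|lra]).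
      apply (Rmult_eq_reg_l (4*l2*(l1-l2))); [lra|auto]. }
    apply sq0 in eb. subst b.
    replace ((l1 - l2) * 0 ^ 2 / s) with 0 in * by (field; lra).
    assert (e2 : (1 - (a ^ 2 + 0)) * (2 * s) * (2 - s * (a ^ 2 + 0)) = 0) by lra.
    pose proof (z_facts l1 l2 a 0 c d h12 h2 hq) as [z0 z1]. fold s in z0, z1.
    replace ((l1 - l2) * 0 ^ 2 / s) with 0 in * by (field; lra).
    assert (ea : a^2 = 1).
    { apply Rmult_integral in e2. destruct e2 as [e2|e2].
      - apply Rmult_integral in e2. destruct e2; lra.
      - nra. }
    assert (c^2 + d^2 = 0) by lra.
    assert (c^2 = 0) by (pose proof (pow2_ge_0 c); pose proof (pow2_ge_0 d); lra).
    assert (d^2 = 0) by (pose proof (pow2_ge_0 c); pose proof (pow2_ge_0 d); lra).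
    assert (c = 0) by (apply sq0; assumption). assert (d = 0) by (apply sq0; assumption). subst c d.
    assert (ef : (a - 1) * (a + 1) = 0) by nra.
    apply Rmult_integral in ef. destruct ef as [e|e]; [left|right]; f_equal; lra.
  - intros [e|e]; subst q; split; try (unfold onS3; cbn; lra);
      intros p hp; [rewrite v1|rewrite v2]; apply low, hp.
Qed.


Ltac mat_tac := intros i j hi hj;
  destruct i as [|[|[|i]]]; try lia; destruct j as [|[|[|j]]]; try lia;
  cbv beta iota zeta delta [Pmat diag3 Id3 RmaxAlpha Nat.eqb q0 q1 q2 q3]; try ring.

Lemma Pm1 : mat_eq (Pmat (mkQ 0 0 1 0)) (diag3 (-1) 1 (-1)). Proof. mat_tac. Qed.
Lemma Pm2 : mat_eq (Pmat (mkQ 0 0 0 1)) (diag3 (-1) (-1) 1). Proof. mat_tac. Qed.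
Lemma Pid1 : mat_eq (Pmat (mkQ 1 0 0 0)) Id3. Proof. mat_tac. Qed.
Lemma Pid2 : mat_eq (Pmat (mkQ (-1) 0 0 0)) Id3. Proof. mat_tac. Qed.
Lemma Pal al : mat_eq (Pmat (mkQ 0 0 (cos al) (sin al))) (RmaxAlpha al).
Proof.
  pose proof (sin2_cos2 al) as h. unfold Rsqr in h.
  mat_tac; rewrite ?cos_2a, ?sin_2a; lra.
Qed.

Lemma sign_sq e : isSign e -> e * e = 1.
Proof. intros [->| ->]; ring. Qed.

Theorem mainTheorem11 (l1 l2 : R) (h12 : l1 > l2) (h2 : l2 > 0) :
  let D := diag3 l1 l2 l2 in
  (* (i) *)
  ((forall q : quat, isGlobMaxG D q <->
      (q = mkQ 0 0 1 0 \/ q = mkQ 0 0 (-1) 0 \/ q = mkQ 0 0 0 1 \/ q = mkQ 0 0 0 (-1) \/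
       exists al, 0 <= al < 2 * PI /\ q = mkQ 0 0 (cos al) (sin al))) /\
   (forall Q : Mat3, isGlobMaxW D Q <->
      (mat_eq Q (diag3 (-1) 1 (-1)) \/ mat_eq Q (diag3 (-1) (-1) 1) \/
       exists al, 0 <= al < 2 * PI /\ mat_eq Q (RmaxAlpha al)))) /\
  (* (ii) *)
  (l1 + l2 > 2 ->
   let s := l1 + l2 in
   let a := sqrt (1/2 + 1/s) in
   let b := sqrt (1/2 - 1/s) in
   let m := (l2 - 1) ^ 2 + 1/2 * (l1 - l2) ^ 2 in
   (forall q : quat, isGlobMinG D q <->
      ((exists e1 e2, isSign e1 /\ isSign e2 /\
          (q = mkQ (e1 * a) 0 0 (e2 * b) \/ q = mkQ (e1 * a) 0 (e2 * b) 0)) \/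
       (exists e1 al, isSign e1 /\ 0 <= al < 2 * PI /\
          q = mkQ (e1 * a) 0 (b * cos al) (b * sin al)))) /\
   (forall q : quat, isGlobMinG D q -> Gfun D q = m) /\
   (forall Q : Mat3, isGlobMinW D Q <->
      exists q, isGlobMinG D q /\ mat_eq Q (Pmat q)) /\
   (forall Q : Mat3, isGlobMinW D Q -> W10 Q D = m)) /\
  (* (iii) *)
  (l1 + l2 <= 2 ->
   (forall q : quat, isGlobMinG D q <-> (q = mkQ 1 0 0 0 \/ q = mkQ (-1) 0 0 0)) /\
   (forall Q : Mat3, isGlobMinW D Q <-> mat_eq Q Id3)).
Proof.
  intro D. unfold D. clear D.
  assert (hmaxc : forall q, isGlobMaxG (diag3 l1 l2 l2) q ->
            exists al, 0 <= al < 2 * PI /\ q = mkQ 0 0 (cos al) (sin al)).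
  { intros [qa qb qc qd] hq. apply qmax_iff in hq; auto.
    destruct hq as [hq [ha hb]]; unfold onS3 in hq; cbn [q0 q1 q2 q3] in *; subst qa qb.
    destruct (polar qc qd 1 ltac:(lra) ltac:(lra)) as [al [hal [hc hd]]].
    exists al. split; auto. f_equal; lra. }
  split; [split|split].
  - intros q. split.
    + intro hq. right; right; right; right. apply hmaxc, hq.
    + intro H. apply qmax_iff; auto.
      destruct H as [->|[->|[->|[->|[al [hal ->]]]]]]; unfold onS3; cbn; try (repeat split; lra).
      pose proof (sin2_cos2 al) as h. unfold Rsqr in h. repeat split; lra.
  - intros Q. split.
    + intro HQ. destruct (max_back _ _ HQ) as [q [hq hE]].
      destruct (hmaxc q hq) as [al [hal ->]].
      right; right. exists al. split; auto. eapply mat_eq_trans; [exact hE|apply Pal].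
    + intros [H|[H|[al [hal H]]]].
      * apply (max_transfer _ _ (mkQ 0 0 1 0)).
        -- apply qmax_iff; auto. unfold onS3; cbn; repeat split; lra.
        -- eapply mat_eq_trans; [apply Pm1|apply mat_eq_sym, H].
      * apply (max_transfer _ _ (mkQ 0 0 0 1)).
        -- apply qmax_iff; auto. unfold onS3; cbn; repeat split; lra.
        -- eapply mat_eq_trans; [apply Pm2|apply mat_eq_sym, H].
      * apply (max_transfer _ _ (mkQ 0 0 (cos al) (sin al))).
        -- apply qmax_iff; auto. unfold onS3; cbn.
           pose proof (sin2_cos2 al) as h. unfold Rsqr in h. repeat split; lra.
        -- eapply mat_eq_trans; [apply Pal|apply mat_eq_sym, H].
  - intro hs. set (s := l1 + l2). set (a := sqrt (1/2 + 1/s)). set (b := sqrt (1/2 - 1/s)). set (m := (l2 - 1) ^ 2 + 1/2 * (l1 - l2) ^ 2).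
    assert (hz0 : 0 <= 1/2 + 1/s).
    { assert (0 < 1/s) by (apply Rdiv_lt_0_compat; unfold s; lra). lra. }
    assert (hz1 : 0 < 1/2 - 1/s).
    { assert (1/s < 1/2) by (apply Rmult_lt_reg_r with s; unfold s; [lra|]; field_simplify; lra). lra. }
    assert (ha2 : a^2 = 1/2 + 1/s) by (apply pow2_sqrt; exact hz0).
    assert (hb2 : b^2 = 1/2 - 1/s) by (apply pow2_sqrt; lra).
    assert (hbp : 0 < b) by (apply sqrt_lt_R0; exact hz1).
    assert (hap : 0 <= a) by apply sqrt_pos.
    assert (valq : forall q, isGlobMinG (diag3 l1 l2 l2) q -> Gfun (diag3 l1 l2 l2) q = m).
    { intros [qa qb qc qd] hq. apply qmin2_iff in hq; auto.
      destruct hq as [hq [hb ha]]. cbn [q0 q1 q2 q3] in *. subst qb.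
      pose proof (Gform_min l1 l2 qa 0 qc qd hq ltac:(lra)) as E. cbv zeta in E.
      rewrite E. fold s. rewrite ha. unfold m.
      replace ((l1 - l2) * 0 ^ 2 / s) with 0 by (field; unfold s; lra).
      fold s. ring. }
    split; [|split; [exact valq|split]].
    + intros q. rewrite qmin2_iff by auto. fold s. split.
      * intros [hq [hb ha]]. destruct q as [qa qb qc qd]. unfold onS3 in hq.
        cbn [q0 q1 q2 q3] in *. subst qb. right.
        assert (ef : (qa - a) * (qa + a) = 0) by nra.
        assert (hcd : qc^2 + qd^2 = b^2) by lra.
        destruct (polar qc qd b hbp hcd) as [al [hal [hc hd]]].
        apply Rmult_integral in ef. destruct ef as [e|e].
        -- exists 1, al. split; [left; reflexivity|]. split; auto. f_equal; lra.
        -- exists (-1), al. split; [right; reflexivity|]. split; auto. f_equal; lra.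
      * intros [[e1 [e2 [he1 [he2 [->| ->]]]]]|[e1 [al [he1 [hal ->]]]]];
          unfold onS3; cbn [q0 q1 q2 q3];
          pose proof (sign_sq e1 he1) as s1.
        -- pose proof (sign_sq e2 he2) as s2.
           split; [|split; [reflexivity|]]; nra.
        -- pose proof (sign_sq e2 he2) as s2.
           split; [|split; [reflexivity|]]; nra.
        -- pose proof (sin2_cos2 al) as h. unfold Rsqr in h.
           split; [|split; [reflexivity|]]; nra.
    + intros Q. split.
      * intro HQ. exact (min_back _ _ HQ).
      * intros [q [hq hE]]. apply (min_transfer _ _ q hq), mat_eq_sym, hE.
    + intros Q HQ. destruct (min_back _ _ HQ) as [q [hq hE]].
      rewrite (W10_ext _ _ _ hE). apply valq, hq.
  - intro hs. assert (hq3 := qmin3_iff l1 l2 h12 h2 hs). split; [exact hq3|].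
    intros Q. split.
    + intro HQ. destruct (min_back _ _ HQ) as [q [hq hE]].
      apply hq3 in hq. destruct hq as [->| ->]; eapply mat_eq_trans; eauto using Pid1, Pid2.
    + intro H. apply (min_transfer _ _ (mkQ 1 0 0 0)).
      * apply hq3. left; reflexivity.
      * eapply mat_eq_trans; [apply Pid1|apply mat_eq_sym, H].
Qed.
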